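(* The $\sigma$-ideal $I_P$ is not generated by closed sets in the Baire topology on $(\omega+1)^\omega$: there is a Borel set $A\in I_P$ such that $A$ is not contained in any countable union of sets $F_n$, each closed in the Baire topology and each belonging to $I_P$.
   Context: The Cantor topology on $(\omega+1)^\omega$ is the product of the order topologies on $\omega+1$; the Baire topology is generated by the sets $[\sigma]=\{x:\sigma\subseteq x\}$, $\sigma\in(\omega+1)^{<\omega}$. $P:(\omega+1)^\omega\to\omega^\omega$ is given by $P(x)(n)=x(n)+1$ if $x(n)<\omega$, $P(x)(n)=0$ if $x(n)=\omega$. $I_P$ is the $\sigma$-ideal of sets $A\subseteq(\omega+1)^\omega$ that can be covered by countably many sets on each of which $P$ is continuous (w.r.t. the Cantor topology). An ideal $I$ is generated by closed sets if every Borel set in $I$ has an $F_\sigma$ superset in $I$. *)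

(* Defs.v *)
From Stdlib Require Import Arith.

(* omega+1 is represented by [option nat]: [Some n] is the natural number n,
   [None] is omega (the top element). *)
Definition Xsp := nat -> option nat.
Definition subset := Xsp -> Prop.

(* Baire topology: generated by the cylinders [sigma], i.e. products of the
   discrete topology on omega+1.  U is open iff every x in U has a cylinder
   nbhd {y | y agrees with x below n} inside U. *)
Definition baire_open (U : subset) : Prop :=
  forall x, U x -> exists n, forall y, (forall i, i < n -> y i = x i) -> U y.

Definition baire_closed (F : subset) : Prop :=
  baire_open (fun x => ~ F x).

(* Cantor topology: product of the order topologies on omega+1.
   Basic nbhd of a point a of omega+1 indexed by m: {a} if a is finite,
   the interval (m-1, omega] = {b | b = omega or b >= m} if a = omega. *)
Definition ord_close (m : nat) (a b : option nat) : Prop :=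
  match a with
  | Some k => b = Some k
  | None => match b with None => True | Some j => m <= j end
  end.

Definition cantor_close (n m : nat) (x y : Xsp) : Prop :=
  forall i, i < n -> ord_close m (x i) (y i).

Definition P (x : Xsp) : nat -> nat :=
  fun n => match x n with Some k => S k | None => 0 end.

(* P restricted to A is continuous, A carrying the subspace topology of the
   Cantor topology and omega^omega its usual (product of discrete) topology. *)
Definition P_continuous_on (A : subset) : Prop :=
  forall x, A x -> forall n, exists N m, forall y, A y -> cantor_close N m x y ->
    forall i, i < n -> P y i = P x i.

(* The sigma-ideal I_P: sets covered by countably many sets on each of which
   P is continuous (a finite cover can be padded with empty sets). *)
Definition in_IP (A : subset) : Prop :=
  exists B : nat -> subset,
    (forall k, P_continuous_on (B k)) /\ (forall x, A x -> exists k, B k x).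

(* Borel sets of (omega+1)^omega: the sigma-algebra generated by the Baire-open
   sets (it coincides with the one generated by the Cantor-open sets). *)
Inductive borel : subset -> Prop :=
  | borel_open : forall U, baire_open U -> borel U
  | borel_compl : forall A, borel A -> borel (fun x => ~ A x)
  | borel_union : forall A : nat -> subset, (forall n, borel (A n)) ->
      borel (fun x => exists n, A n x).

(* Main.v *)
Require Import Defs.
From Stdlib Require Import Arith Lia Classical FunctionalExtensionality PropExtensionality IndefiniteDescription Cantor.

Definition fl (i j : nat) : nat := S (2 * Cantor.to_nat (i, j)).

Lemma fl_ge i j : 2 * i < fl i j /\ j < fl i j.
Proof. unfold fl. pose proof (Cantor.to_nat_non_decreasing i j). lia. Qed.

Lemma fl_inj i j i' j' : fl i j = fl i' j' -> i = i' /\ j = j'.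
Proof.
  unfold fl. intro H.
  assert (H0 : Cantor.to_nat (i,j) = Cantor.to_nat (i',j')) by lia.
  apply Cantor.to_nat_inj in H0. injection H0; auto.
Qed.

Lemma fl_odd i j k : fl i j <> 2 * k.
Proof. unfold fl; lia. Qed.

Definition agree (y x : Xsp) (n : nat) : Prop := forall i, i < n -> y i = x i.

Definition upd (x : Xsp) (c : nat) (v : option nat) : Xsp :=
  fun i => if Nat.eq_dec i c then v else x i.

Definition Tset : subset := fun x =>
  (forall k, x (S (2*k)) <> None) /\
  (forall i j, x (2*i) <> None -> x (fl i j) <> Some 0).

Definition Aset : subset := fun x =>
  Tset x /\ forall i, x (2*i) = None -> exists j, x (fl i j) = Some 0.

Definition iterS (g : nat -> Xsp * nat -> Xsp * nat) (p0 : Xsp*nat) : nat -> Xsp*nat :=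
  fix f n := match n with 0 => p0 | S n => g n (f n) end.

Lemma baire (S : subset) (G : nat -> subset) (w0 : Xsp) (M0 : nat) :
  baire_closed S -> S w0 ->
  (forall x, S x -> agree x w0 M0 -> exists k, G k x) ->
  exists k w M, S w /\ forall w', S w' -> agree w' w M -> forall M',
      exists y, S y /\ G k y /\ agree y w' M'.
Proof.
  intros HS Hw0 Hcov.
  apply NNPP; intro Hno.
  assert (H : forall k w M, S w -> exists w' M', S w' /\ agree w' w M /\ M < M' /\
               forall y, S y -> agree y w' M' -> ~ G k y).
  { intros k w M Sw. apply NNPP; intro H1. apply Hno. exists k, w, M. split; auto.
    intros w' Sw' Aw' M'. apply NNPP; intro H2. apply H1.
    exists w', (Nat.max M' (Datatypes.S M)). split; auto; split; auto; split; [lia|].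
    intros y Sy Ay Gy. apply H2. exists y. split; auto; split; auto.
    intros i Hi; apply Ay; lia. }
  assert (Hc : forall k (p : Xsp*nat), {p' : Xsp*nat | S (fst p) -> S (fst p') /\
     agree (fst p') (fst p) (snd p) /\ snd p < snd p' /\
     forall y, S y -> agree y (fst p') (snd p') -> ~ G k y}).
  { intros k p; apply constructive_indefinite_description.
    destruct (classic (S (fst p))) as [Sp|nSp].
    - destruct (H k _ (snd p) Sp) as (w'&M'&H1&H2&H3&H4). exists (w', M'). intros _. simpl. auto.
    - exists p. intro; contradiction. }
  set (sq := iterS (fun k p => proj1_sig (Hc k p)) (w0, M0)).
  assert (Hstep : forall n, S (fst (sq n)) /\ S (fst (sq (Datatypes.S n))) /\
     agree (fst (sq (Datatypes.S n))) (fst (sq n)) (snd (sq n)) /\ snd (sq n) < snd (sq (Datatypes.S n)) /\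
     forall y, S y -> agree y (fst (sq (Datatypes.S n))) (snd (sq (Datatypes.S n))) -> ~ G n y).
  { induction n.
    - simpl. destruct (Hc 0 (w0, M0)) as [p' Hp']. simpl. simpl in Hp'. destruct (Hp' Hw0) as (a&b&c&d).
      auto.
    - destruct IHn as (_&IH&_). change (sq (Datatypes.S (Datatypes.S n))) with (proj1_sig (Hc (Datatypes.S n) (sq (Datatypes.S n)))).
      destruct (Hc (Datatypes.S n) (sq (Datatypes.S n))) as [p' Hp']. simpl.
      destruct (Hp' IH) as (a&b&c&d). auto. }
  assert (Hmon : forall a b, a <= b -> snd (sq a) <= snd (sq b)).
  { intros a b Hab. induction Hab; auto. pose proof (Hstep m) as (_&_&_&h&_). lia. }
  assert (Hge : forall n, n <= snd (sq n)).
  { induction n; [lia|]. pose proof (Hstep n) as (_&_&_&h&_). lia. }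
  assert (Hchain : forall a b, a <= b -> agree (fst (sq b)) (fst (sq a)) (snd (sq a))).
  { intros a b Hab. induction Hab. - intros i _; auto.
    - intros i Hi. pose proof (Hstep m) as (_&_&h&_&_). rewrite h. apply IHHab; auto.
      pose proof (Hmon a m Hab). lia. }
  set (x := fun c => fst (sq (Datatypes.S c)) c).
  assert (Hx : forall k, agree x (fst (sq k)) (snd (sq k))).
  { intros k c Hc'. unfold x. destruct (le_lt_dec (Datatypes.S c) k) as [h|h].
    - symmetry. apply (Hchain _ _ h). pose proof (Hge (Datatypes.S c)). lia.
    - apply (Hchain k (Datatypes.S c)); [lia|auto]. }
  assert (Sx : S x).
  { apply NNPP; intro nS. destruct (HS x nS) as [n Hn]. apply (Hn (fst (sq n))).
    - intros i Hi. symmetry. apply Hx. pose proof (Hge n). lia.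
    - apply Hstep. }
  destruct (Hcov x Sx (Hx 0)) as [k Gk].
  pose proof (Hstep k) as (_&_&_&_&h). apply (h x Sx (Hx _) Gk).
Qed.

Lemma Tclosed : baire_closed Tset.
Proof.
  intros x nT. unfold Tset in nT. apply not_and_or in nT. destruct nT as [h|h].
  - apply not_all_ex_not in h. destruct h as [k hk]. apply NNPP in hk.
    exists (S (S (2*k))). intros y Ay [T1 T2]. apply (T1 k). rewrite Ay by lia. auto.
  - apply not_all_ex_not in h. destruct h as [i h].
    apply not_all_ex_not in h. destruct h as [j h].
    apply imply_to_and in h. destruct h as [h1 h2]. apply NNPP in h2.
    pose proof (fl_ge i j).
    exists (S (fl i j)). intros y Ay [T1 T2]. apply (T2 i j).
    + rewrite Ay by lia. auto.
    + rewrite Ay by lia. auto.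
Qed.

Lemma Tupd_none x i : Tset x -> Tset (upd x (2*i) None).
Proof.
  intros [T1 T2]. unfold upd. split.
  - intro k. destruct (Nat.eq_dec _ _); [lia|auto].
  - intros i' j. destruct (Nat.eq_dec (fl i' j) (2*i)) as [e|_];
      [exfalso; eapply fl_odd; eauto|].
    destruct (Nat.eq_dec (2*i') (2*i)); [tauto|]. auto.
Qed.

Lemma Tupd_flag x i j : Tset x -> x (2*i) = None -> Tset (upd x (fl i j) (Some 0)).
Proof.
  intros [T1 T2] Hn. unfold upd. split.
  - intro k. destruct (Nat.eq_dec _ _); [congruence|auto].
  - intros i' j'. destruct (Nat.eq_dec (2*i') (fl i j)) as [e|_];
      [exfalso; eapply fl_odd; eauto|].
    destruct (Nat.eq_dec (fl i' j') (fl i j)) as [e|].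
    + apply fl_inj in e. destruct e; subst. tauto.
    + auto.
Qed.

Lemma Tupd_some x i m : Tset x -> (forall j, x (fl i j) <> Some 0) -> Tset (upd x (2*i) (Some m)).
Proof.
  intros [T1 T2] Hf. unfold upd. split.
  - intro k. destruct (Nat.eq_dec _ _); [lia|auto].
  - intros i' j. destruct (Nat.eq_dec (fl i' j) (2*i)) as [e|_];
      [exfalso; eapply fl_odd; eauto|].
    destruct (Nat.eq_dec (2*i') (2*i)) as [e|].
    + assert (i' = i) by lia. subst. auto.
    + auto.
Qed.

Lemma fan (z : Xsp) (L : nat) (F : subset) : Tset z ->
  (forall y, Tset y -> agree y z L -> F y) -> in_IP F -> False.
Proof.
  intros Tz HF [C [HC HcovC]].
  set (Sf := fun y => Tset y /\ agree y z L /\ forall i j, L <= fl i j -> y (fl i j) <> Some 0).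
  assert (Scl : baire_closed Sf).
  { intros x nS. unfold Sf in nS. apply not_and_or in nS. destruct nS as [h|h].
    - destruct (Tclosed x h) as [n Hn]. exists n. intros y Ay [Ty _]. exact (Hn y Ay Ty).
    - apply not_and_or in h. destruct h as [h|h].
      + apply not_all_ex_not in h. destruct h as [i h].
        apply imply_to_and in h. destruct h as [h1 h2].
        exists L. intros y Ay [_ [Az _]]. apply h2. rewrite <- (Ay i h1). auto.
      + apply not_all_ex_not in h. destruct h as [i h].
        apply not_all_ex_not in h. destruct h as [j h].
        apply imply_to_and in h. destruct h as [h1 h2]. apply NNPP in h2.
        exists (S (fl i j)). intros y Ay [_ [_ Hf]]. apply (Hf i j h1).
        rewrite Ay by lia. auto. }
  set (w0 := fun c => if lt_dec c L then z c else Some 1).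
  assert (Sw0 : Sf w0).
  { destruct Tz as [T1 T2]. unfold Sf, w0. split; [split|split].
    - intro k. destruct (lt_dec _ _); [auto|congruence].
    - intros i j. pose proof (fl_ge i j).
      destruct (lt_dec (fl i j) L); [|congruence].
      destruct (lt_dec (2*i) L); [|lia]. auto.
    - intros i Hi. destruct (lt_dec _ _); [auto|lia].
    - intros i j Hl. destruct (lt_dec _ _); [lia|congruence]. }
  destruct (baire Sf C w0 0 Scl Sw0) as (k & w & M & Sw & D).
  { intros x [Tx [Ax _]] _. apply HcovC. apply HF; auto. }
  set (i := M + L).
  set (w1 := upd w (2*i) None).
  assert (Sw1 : Sf w1).
  { destruct Sw as [Tw [Aw Fw]]. split; [|split].
    - apply Tupd_none; auto.
    - intros c Hc. unfold w1, upd. destruct (Nat.eq_dec _ _); [lia|auto].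
    - intros i' j Hl. unfold w1, upd. destruct (Nat.eq_dec _ _) as [e|];
        [exfalso; eapply fl_odd; eauto|auto]. }
  assert (A1 : agree w1 w M).
  { intros c Hc. unfold w1, upd. destruct (Nat.eq_dec _ _); [lia|auto]. }
  destruct (D w1 Sw1 A1 (Datatypes.S (2*i))) as (x & Sx & Cx & Ax).
  assert (x2i : x (2*i) = None).
  { rewrite Ax by lia. unfold w1, upd. destruct (Nat.eq_dec _ _); [auto|lia]. }
  destruct (HC k x Cx (Datatypes.S (2*i))) as (N & m & HN).
  set (w2 := upd x (2*i) (Some m)).
  assert (Sw2 : Sf w2).
  { destruct Sx as [Tx [Azx Fx]]. split; [|split].
    - apply Tupd_some; auto. intro j. apply Fx. pose proof (fl_ge i j). unfold i in *. lia.
    - intros c Hc. unfold w2, upd. destruct (Nat.eq_dec _ _); [unfold i in *; lia|auto].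
    - intros i' j Hl. unfold w2, upd. destruct (Nat.eq_dec _ _) as [e|];
        [exfalso; eapply fl_odd; eauto|auto]. }
  assert (A2 : agree w2 w M).
  { intros c Hc. unfold w2, upd. destruct (Nat.eq_dec _ _); [unfold i in *; lia|].
    rewrite Ax by (unfold i in *; lia). apply A1; auto. }
  destruct (D w2 Sw2 A2 (Nat.max N (Datatypes.S (2*i)))) as (y & Sy & Cy & Ay).
  assert (CC : cantor_close N m x y).
  { intros c Hc. rewrite Ay by lia. unfold w2, upd. destruct (Nat.eq_dec _ _) as [e|].
    - subst c. rewrite x2i. simpl. lia.
    - destruct (x c); simpl; auto. }
  pose proof (HN y Cy CC (2*i) ltac:(lia)) as E.
  unfold P in E. rewrite x2i in E. rewrite Ay in E by lia.
  unfold w2, upd in E. destruct (Nat.eq_dec _ _); [discriminate|lia].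
Qed.

Lemma contA : P_continuous_on Aset.
Proof.
  intros x Ax n.
  assert (key : forall c, exists N, forall y, Aset y -> cantor_close N 0 x y -> P y c = P x c).
  { intro c. destruct (x c) eqn:E.
    - exists (S c). intros y Ay Hc. specialize (Hc c ltac:(lia)). rewrite E in Hc. simpl in Hc.
      unfold P; rewrite Hc, E; auto.
    - destruct Ax as [[T1 T2] Ax'].
      destruct (Nat.Even_or_Odd c) as [[i Hi]|[i Hi]].
      + subst c. destruct (Ax' i E) as [j Hj]. exists (S (fl i j)).
        intros y [[U1 U2] _] Hc. specialize (Hc (fl i j) ltac:(lia)). rewrite Hj in Hc; simpl in Hc.
        unfold P. rewrite E. destruct (y (2*i)) eqn:Ey; auto. exfalso. apply (U2 i j); congruence.
      + exfalso. apply (T1 i). replace (S (2*i)) with c by lia. auto. }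
  assert (H : forall n, exists N, forall y, Aset y -> cantor_close N 0 x y -> forall i, i < n -> P y i = P x i).
  { induction n0.
    - exists 0; intros; lia.
    - destruct IHn0 as [N1 H1]. destruct (key n0) as [N2 H2]. exists (Nat.max N1 N2).
      intros y Ay Hc i Hi.
      destruct (Nat.eq_dec i n0).
      + subst. apply H2; auto. intros c Hc'; apply Hc; lia.
      + apply H1; auto; [intros c Hc'; apply Hc; lia|lia]. }
  destruct (H n) as [N HN]. exists N, 0. auto.
Qed.

Lemma borel_ext (A B : subset) : (forall x, A x <-> B x) -> borel A -> borel B.
Proof.
  intros H HA. replace B with A; auto. apply functional_extensionality; intro x;
  apply propositional_extensionality; auto.
Qed.

Lemma borel_closed F : baire_closed F -> borel F.
Proof.
  intro H. apply (borel_ext (fun x => ~ ~ F x)).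
  - intro x; split; [apply NNPP|auto].
  - apply borel_compl, borel_open, H.
Qed.

Lemma borel_or A B : borel A -> borel B -> borel (fun x => A x \/ B x).
Proof.
  intros HA HB.
  apply (borel_ext (fun x => exists n, (match n with 0 => A | _ => B end) x)).
  - intro x; split.
    + intros [[|n] h]; auto.
    + intros [h|h]; [exists 0|exists 1]; auto.
  - apply borel_union. intros [|n]; auto.
Qed.

Lemma borel_all (A : nat -> subset) : (forall n, borel (A n)) -> borel (fun x => forall n, A n x).
Proof.
  intro H. apply (borel_ext (fun x => ~ exists n, ~ A n x)).
  - intro x; split.
    + intros h n. apply NNPP; intro h'; apply h; eauto.
    + intros h [n hn]; auto.
  - apply borel_compl, borel_union. intro n; apply borel_compl; auto.
Qed.

Lemma borel_imp A B : borel A -> borel B -> borel (fun x => A x -> B x).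
Proof.
  intros HA HB. apply (borel_ext (fun x => ~ A x \/ B x)).
  - intro x; split.
    + intros [h|h] a; tauto.
    + intro h. apply imply_to_or; auto.
  - apply borel_or; auto. apply borel_compl; auto.
Qed.

Lemma borel_and A B : borel A -> borel B -> borel (fun x => A x /\ B x).
Proof.
  intros HA HB. apply (borel_ext (fun x => ~ (~ A x \/ ~ B x))).
  - intro x; split.
    + intro h. split; apply NNPP; intro; apply h; auto.
    + intros [a b] [h|h]; auto.
  - apply borel_compl, borel_or; apply borel_compl; auto.
Qed.

Lemma borel_eqv c v : borel (fun x => x c = v).
Proof.
  apply borel_open. intros x Hx. exists (S c). intros y Ay. rewrite Ay by lia. auto.
Qed.

Lemma borelA : borel Aset.
Proof.
  apply borel_and.
  - apply borel_closed, Tclosed.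
  - apply borel_all. intro i. apply borel_imp; [apply borel_eqv|].
    apply borel_union. intro j. apply borel_eqv.
Qed.

Theorem mainTheorem8 :
  exists A : subset,
    borel A /\ in_IP A /\
    ~ (exists F : nat -> subset,
         (forall n, baire_closed (F n) /\ in_IP (F n)) /\
         (forall x, A x -> exists n, F n x)).
Proof.
  exists Aset. split; [apply borelA|split].
  - exists (fun _ => Aset). split; [intros; apply contA|]. intros x Ax; exists 0; auto.
  - intros (F & HF & Hcov).
    set (bad := fun i (x : Xsp) => x (2*i) = None /\ forall j, x (fl i j) <> Some 0).
    set (G := fun k x => (exists n, k = 2*n /\ F n x) \/ (exists n, k = S (2*n) /\ bad n x)).
    assert (Tw0 : Tset (fun _ => Some 1)).
    { split; intros; congruence. }
    destruct (baire Tset G (fun _ => Some 1) 0 Tclosed Tw0) as (k & w & M & Tw & D).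
    { intros x Tx _. destruct (classic (Aset x)) as [Ax|nA].
      - destruct (Hcov x Ax) as [n Hn]. exists (2*n). left. eauto.
      - assert (h : ~ forall i, x (2*i) = None -> exists j, x (fl i j) = Some 0)
          by (intro h; apply nA; split; auto).
        apply not_all_ex_not in h. destruct h as [i h]. apply imply_to_and in h.
        destruct h as [h1 h2]. exists (S (2*i)). right. exists i. split; auto.
        split; auto. intros j hj. apply h2; eauto. }
    destruct (Nat.Even_or_Odd k) as [[n Hn]|[n Hn]].
    + apply (fan w M (F n) Tw); [|apply HF].
      intros y Ty Ay. apply NNPP; intro nF. destruct (proj1 (HF n) y nF) as [N HN].
      destruct (D y Ty Ay N) as (y' & Ty' & Gy' & Ay').
      destruct Gy' as [(n' & e & Fy')|(n' & e & _)]; [|lia].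
      assert (n' = n) by lia. subst n'. exact (HN y' Ay' Fy').
    + destruct (D w Tw (fun _ _ => eq_refl) M) as (y & Ty & Gy & Ay).
      destruct Gy as [(n' & e & _)|(n' & e & [b1 b2])]; [lia|].
      assert (n' = n) by lia. subst n'.
      set (c := fl n M).
      assert (Ty' : Tset (upd y c (Some 0))) by (apply Tupd_flag; auto).
      assert (Ay' : agree (upd y c (Some 0)) w M).
      { intros i Hi. unfold upd. destruct (Nat.eq_dec _ _).
        - pose proof (fl_ge n M). unfold c in *. lia.
        - auto. }
      destruct (D _ Ty' Ay' (S c)) as (y'' & Ty'' & Gy'' & Ay'').
      destruct Gy'' as [(n' & e' & _)|(n' & e' & [_ b2'])]; [lia|].
      assert (n' = n) by lia. subst n'.
      apply (b2' M). fold c. rewrite Ay'' by lia. unfold upd.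
      destruct (Nat.eq_dec _ _); [auto|congruence].
Qed.
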